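(* Let $s\in\Sigma^n$ and let $b=s[0]$ be its first symbol. Then \[P(H(s)) - P(H(ICR(s))) \equiv e_b \mod K.\]
   Context: Let $k\ge 1$ be an integer, $\Sigma=\{0,1,\dots,k-1\}$ with arithmetic on symbols taken modulo $k$, and $n\ge 1$. For $s\in\Sigma^n$ write $s=s[0]s[1]\cdots s[n-1]$. The histogram of a string $s$ is $H(s):\Sigma\to\mathbb{Z}$, $H(s)(c)=$ number of occurrences of $c$ in $s$. For $b\in\Sigma$, $e_b:\Sigma\to\mathbb{Z}$ is the indicator function of $b$. $K:\Sigma\to\mathbb{Z}$ is the constant function $1$. For $H:\Sigma\to\mathbb{Z}$, its partial sum is $P(H):\Sigma\to\mathbb{Z}$, $P(H)(i)=\sum_{j=0}^{i}H(j)$. For $F,G:\Sigma\to\mathbb{Z}$, $F\equiv G \mod K$ means $F-G$ is an integer multiple of $K$. The incremented cycle register rule is $ICR(s)=s[1]s[2]\cdots s[n-1](s[0]+1)$. *)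

(* Defs.v *)
From HB Require Import structures.
From mathcomp Require Import all_boot all_order all_algebra.
Set Implicit Arguments. Unset Strict Implicit. Unset Printing Implicit Defensive.
Import GRing.Theory.
Local Open Scope ring_scope.

(* Alphabet Sigma = 'I_k = {0,...,k-1}; successor modulo k is ordS
   (val (ordS c) = (c + 1) %% k). Strings are sequences over 'I_k. *)

Definition hist k (s : seq 'I_k) : 'I_k -> int := fun c => (count_mem c s)%:Z.

Definition ind k (b : 'I_k) : 'I_k -> int := fun c => (c == b)%:Z.

Definition psum k (H : 'I_k -> int) : 'I_k -> int :=
  fun i => \sum_(j < k | (val j <= val i)%N) H j.

(* F == G mod K (K the constant function 1): F - G = m * K for some integer m. *)
Definition eqmodK k (F G : 'I_k -> int) : Prop :=
  exists m : int, forall c, F c - G c = m * 1.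

Definition ICR k (s : seq 'I_k) : seq 'I_k :=
  match s with
  | [::] => [::]
  | x :: t => rcons t (ordS x)
  end.

(* Main.v *)
Require Import Defs.
From HB Require Import structures.
From mathcomp Require Import all_boot all_order all_algebra.
From mathcomp Require Import zify.
Import GRing.Theory.
Local Open Scope ring_scope.

Lemma sum_ind k (P : pred 'I_k) (x : 'I_k) :
  \sum_(j < k | P j) ((j == x)%:Z : int) = (P x)%:Z.
Proof.
case Px: (P x).
  rewrite (bigD1 x) //= eqxx big1 ?addr0 // => j /andP [_ /negbTE ->]; done.
rewrite big1 // => j Pj; case: eqP => // E; by rewrite E Px in Pj.
Qed.

Theorem lemma1 (k : nat) (hk : (1 <= k)%N) (n : nat) (hn : (1 <= n)%N)
  (s : n.-tuple 'I_k) :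
  let b := tnth s (Ordinal hn) in
  eqmodK (fun c => psum (hist s) c - psum (hist (ICR s)) c) (ind b).
Proof.
case: s => [[|x t] Hs]; first by exfalso; move: hn Hs; case: n.
move=> b; rewrite {}/b (_ : tnth _ _ = x) //.
exists (if (x.+1 < k)%N then 0 else -1) => c.
rewrite /psum -sumrB.
have -> : \sum_(j < k | (j <= c)%N) (hist (x :: t) j - hist (rcons t (ordS x)) j)
   = \sum_(j < k | (j <= c)%N) (((j == x)%:Z : int) - ((j == ordS x)%:Z)).
  apply: eq_bigr => j _; rewrite /hist /= -cats1 count_cat /=.
  rewrite (eq_sym x) (eq_sym (ordS x)); lia.
rewrite sumrB !sum_ind /ind mulr1.
have hx := ltn_ord x.
case: ifP => Hk.
  have -> : val (ordS x) = x.+1 by rewrite /= modn_small.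
  case: (ltngtP x c) => H.
  - have -> : (c == x) = false by apply/eqP => E; rewrite E ltnn in H.
    by rewrite subrr.
  - have -> : (c == x) = false by apply/eqP => E; rewrite E ltnn in H.
    by rewrite subrr.
  - have -> : (c == x) by apply/eqP; apply: val_inj.
    by [].
have Ex : x.+1 = k by apply/eqP; rewrite eqn_leq hx leqNgt Hk.
have -> : val (ordS x) = 0%N by rewrite /= Ex modnn.
have hc := ltn_ord c.
rewrite leq0n.
case: (ltngtP x c) => H.
- by exfalso; move: hc H; lia.
- have -> : (c == x) = false by apply/eqP => E; rewrite E ltnn in H.
  done.
- have -> : (c == x) by apply/eqP; apply: val_inj.
  done.
Qed.
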